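(* Let $G=(V,E)$ be a finite, simple, connected graph with $|V|\geq 3$, let $\Gamma_3(G)=\{\mathcal{T}_1,\dots,\mathcal{T}_m\}$, and let $d\in\mathrm{Der}(\mathcal{A}(G))$ with $d(e_i)=\sum_{k\in V}d_{ik}e_k$. Then: (a) $d_{ii}=0$ for every $i\in V$; (b) for $i\neq j$, $d_{ij}=0$ unless $i$ and $j$ belong to the same class $\mathcal{T}_\ell\in\Gamma_3(G)$; (c) for $i\neq j$ in the same $\mathcal{T}_\ell$, $d_{ij}=-d_{ji}$; (d) for each $\ell\in\{1,\dots,m\}$ and each $i\in\mathcal{T}_\ell$, $\sum_{k\in\mathcal{T}_\ell}d_{ki}=0$. Equivalently, after a permutation of the basis listing the vertices of $\mathcal{T}_1$, then $\mathcal{T}_2$, ..., then $\mathcal{T}_m$, then the remaining vertices, the matrix $(d_{ij})$ is block diagonal with diagonal blocks $A_1(d),\dots,A_m(d),\mathbf{0}$, where each $A_\ell(d)$ is a $|\mathcal{T}_\ell|\times|\mathcal{T}_\ell|$ skew-symmetric matrix with zero diagonal (of the form $U-U^T$ with $U$ strictly upper triangular) satisfying the column-sum condition (d), and all other entries are zero. If $\Gamma_3(G)=\emptyset$ this reduces to $d=0$.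
   Context: Throughout, $\mathbb{K}$ is a field of characteristic $0$. A graph $G=(V,E)$ has vertex set $V=\{1,\dots,n\}$ and is assumed finite, simple (no loops, no multiple edges) and connected. $\mathcal{N}(i)$ denotes the set of neighbors of vertex $i$, $\deg(i)=|\mathcal{N}(i)|$, and $(a_{ij})$ is the adjacency matrix ($a_{ij}=1$ if $i,j$ are adjacent, $0$ otherwise). The evolution algebra $\mathcal{A}(G)$ is the $\mathbb{K}$-algebra with basis $\{e_i: i\in V\}$ and product $e_i\cdot e_i=\sum_{k\in V}a_{ik}e_k=\sum_{k\in\mathcal{N}(i)}e_k$ and $e_i\cdot e_j=0$ for $i\neq j$. A derivation of $\mathcal{A}(G)$ is a linear map $d:\mathcal{A}(G)\to\mathcal{A}(G)$ with $d(u\cdot v)=d(u)\cdot v+u\cdot d(v)$ for all $u,v$; $\mathrm{Der}(\mathcal{A}(G))$ is the space of derivations, and for $d$ in it we write $d(e_i)=\sum_{k\in V}d_{ik}e_k$. Two vertices $i,j$ are twins, written $i\sim_t j$, if $\mathcal{N}(i)=\mathcal{N}(j)$; this is an equivalence relation whose classes are called twin classes. $\Gamma_3(G)$ denotes the set of twin classes of $G$ having at least three vertices. *)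

(* Defs.v *)
From HB Require Import structures.
From mathcomp Require Import all_boot all_order all_algebra.
Set Implicit Arguments. Unset Strict Implicit. Unset Printing Implicit Defensive.
Import Order.TTheory GRing.Theory Num.Theory.
Local Open Scope ring_scope.

Definition simple_graph (n : nat) (adj : rel 'I_n) : Prop :=
  symmetric adj /\ irreflexive adj.

Definition connected_graph (n : nat) (adj : rel 'I_n) : Prop :=
  forall i j : 'I_n, connect adj i j.

(* Elements of the evolution algebra A(G) are coordinate row vectors in the
   basis (e_i).  Product: e_i e_i = sum_{k in N(i)} e_k, e_i e_j = 0 (i<>j),
   extended bilinearly: (u.v)_k = sum_i u_i v_i a_{ik}. *)
Definition evo_mul (K : fieldType) (n : nat) (adj : rel 'I_n)
    (u v : 'rV[K]_n) : 'rV[K]_n :=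
  \row_(k < n) \sum_(i < n) u 0 i * v 0 i * (adj i k)%:R.

(* The linear map d with d(e_i) = sum_k D i k e_k acts on coordinate rows as
   u |-> u *m D. D is a derivation iff the Leibniz rule holds. *)
Definition is_derivation (K : fieldType) (n : nat) (adj : rel 'I_n)
    (D : 'M[K]_n) : Prop :=
  forall u v : 'rV[K]_n,
    evo_mul adj u v *m D = evo_mul adj (u *m D) v + evo_mul adj u (v *m D).

Definition twins (n : nat) (adj : rel 'I_n) (i j : 'I_n) : bool :=
  [forall k, adj i k == adj j k].

Definition twin_class (n : nat) (adj : rel 'I_n) (i : 'I_n) : {set 'I_n} :=
  [set j | twins adj i j].

Definition in_Gamma3 (n : nat) (adj : rel 'I_n) (i : 'I_n) : bool :=
  (3 <= #|twin_class adj i|)%N.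

(* Main.v *)
Require Import Defs.
From HB Require Import structures.
From mathcomp Require Import all_boot all_order all_algebra.
Import GRing.Theory.
Local Open Scope ring_scope.

Lemma mulrn_eq0_pchar (K : fieldType) (hK : [pchar K] =i pred0) (x : K) (m : nat) :
  (0 < m)%N -> x *+ m = 0 -> x = 0.
Proof.
move=> hm /eqP; rewrite -mulr_natr mulf_eq0 ((pcharf0P K).1 hK).
by rewrite eqn0Ngt hm orbF => /eqP.
Qed.
Arguments mulrn_eq0_pchar {K} hK {x m}.

Lemma mulrnI_pchar (K : fieldType) (hK : [pchar K] =i pred0) (x y : K) (m : nat) :
  (0 < m)%N -> x *+ m = y *+ m -> x = y.
Proof.
move=> hm h; apply/eqP; rewrite -subr_eq0; apply/eqP.
by apply: (mulrn_eq0_pchar hK hm); rewrite mulrnBl h subrr.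
Qed.
Arguments mulrnI_pchar {K} hK {x y m}.

Lemma evo_delta_r (K : fieldType) n (adj : rel 'I_n) (u : 'rV[K]_n) j t :
  evo_mul adj u (delta_mx 0 j) 0 t = u 0 j * (adj j t)%:R.
Proof.
rewrite mxE (bigD1 j) //= big1 ?addr0; first by rewrite mxE !eqxx mulr1.
by move=> k /negbTE hk; rewrite mxE hk andbF mulr0 mul0r.
Qed.

Lemma evo_delta_l (K : fieldType) n (adj : rel 'I_n) (v : 'rV[K]_n) i t :
  evo_mul adj (delta_mx 0 i) v 0 t = v 0 i * (adj i t)%:R.
Proof.
rewrite mxE (bigD1 i) //= big1 ?addr0; first by rewrite mxE !eqxx mul1r.
by move=> k /negbTE hk; rewrite mxE hk andbF !mul0r.
Qed.

Lemma deriv_eq (K : fieldType) n (adj : rel 'I_n) (D : 'M[K]_n)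
  (hD : is_derivation adj D) i j t :
  (i == j)%:R * \sum_k (adj j k)%:R * D k t
  = D i j * (adj j t)%:R + D j i * (adj i t)%:R.
Proof.
have := congr1 (fun M : 'rV[K]_n => M 0 t) (hD (delta_mx 0 i) (delta_mx 0 j)).
rewrite /= [in RHS]mxE evo_delta_r evo_delta_l -!rowE !mxE => <-.
rewrite big_distrr /=; apply: eq_bigr => k _.
rewrite evo_delta_r mxE eqxx /= mulrA; congr (_ * _ * _).
by rewrite eq_sym.
Qed.
Arguments deriv_eq {K n adj D} hD i j t.

Theorem theorem2p2 (K : fieldType) (hK : [pchar K] =i pred0)
  (n : nat) (adj : rel 'I_n)
  (hsimple : simple_graph adj) (hconn : connected_graph adj) (hn : (3 <= n)%N)
  (D : 'M[K]_n) (hD : is_derivation adj D) :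
  (* (a) *) (forall i : 'I_n, D i i = 0) /\
  (* (b) *) (forall i j : 'I_n, i != j -> D i j != 0 ->
               twins adj i j && in_Gamma3 adj i) /\
  (* (c) *) (forall i j : 'I_n, i != j -> twins adj i j -> in_Gamma3 adj i ->
               D i j = - D j i) /\
  (* (d) *) (forall i : 'I_n, in_Gamma3 adj i ->
               \sum_(k in twin_class adj i) D k i = 0).
Proof.
move: hsimple => [hsym hirr].
have twE : forall a b, twins adj a b -> forall k, adj a k = adj b k.
  by move=> a b /forallP h k; apply/eqP.
have twR : forall a, twins adj a a by move=> a; apply/forallP => k.
have twT : forall a b c, twins adj a b -> twins adj a c -> twins adj b c.
  move=> a b c hab hac; apply/forallP => k.
  by rewrite -(twE _ _ hab) (twE _ _ hac).
have twS : forall a b, twins adj a b -> twins adj b a.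
  by move=> a b h; apply: twT h (twR a).
have clsEq : forall a b, twins adj a b -> twin_class adj a = twin_class adj b.
  move=> a b h; apply/setP => x; rewrite !inE.
  apply/idP/idP => hx; [exact: twT h hx | exact: twT (twS _ _ h) hx].
have nb : forall i, exists s, adj i s.
  move=> i.
  have h0 : (0 < n)%N by apply: leq_trans hn.
  have h1 : (1 < n)%N by apply: leq_trans hn.
  have [j hj] : exists j : 'I_n, j != i.
    case: (eqVneq i (Ordinal h0)) => h.
    - by exists (Ordinal h1); rewrite h; apply/eqP => /(congr1 val).
    - by exists (Ordinal h0); rewrite eq_sym.
  have /connectP [p hp hl] := hconn i j.
  case: p hp hl => [|s p] /=.
    by move=> _ hl; rewrite hl eqxx in hj.
  by move=> /andP[h _] _; exists s.
have E2 : forall i j t, i != j ->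
    D i j * (adj j t)%:R + D j i * (adj i t)%:R = 0.
  by move=> i j t h; rewrite -(deriv_eq hD) (negbTE h) mul0r.
have nontw : forall i j, i != j -> ~~ twins adj i j -> D i j = 0.
  move=> i j hij; rewrite negb_forall => /existsP [t ht].
  case hit: (adj i t) ht; case hjt: (adj j t) => //= _.
  - have hji : j != i by rewrite eq_sym.
    have := E2 j i t hji; rewrite hit hjt mulr1 mulr0 addr0 => hD0.
    have [s hs] := nb j.
    by have := E2 i j s hij; rewrite hs hD0 mul0r addr0 mulr1.
  - by have := E2 i j t hij; rewrite hit hjt mulr1 mulr0 addr0.
have skew : forall i j, i != j -> twins adj i j -> D i j = - D j i.
  move=> i j hij tw; have [s hs] := nb i.
  have := E2 i j s hij; rewrite -(twE _ _ tw) hs mulr1 mulr1 => h.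
  by apply/eqP; rewrite -addr_eq0 h.
have Scl : forall w t, adj w t -> \sum_(k in twin_class adj t) D k t = D w w *+ 2.
  move=> w t ht.
  have := deriv_eq hD w w t; rewrite eqxx mul1r ht mulr1 -mulr2n => <-.
  rewrite big_mkcond /=; apply: eq_bigr => k _; rewrite inE.
  case: (boolP (twins adj t k)) => h.
    by rewrite [adj w k]hsym -(twE _ _ h) hsym ht mul1r.
  have hkt : k != t by apply: contraNneq h => ->.
  by rewrite (nontw k t hkt) ?mulr0 //; apply: contra h => /twS.
have ckey : forall w t, adj w t -> D t t = D w w *+ 2.
  move=> w t ht.
  have hT : forall a, a \in twin_class adj t -> adj w a.
    by move=> a; rewrite inE => h; rewrite hsym -(twE _ _ h) hsym ht.
  have cconst : forall a, a \in twin_class adj t -> D a a = D t t.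
    move=> a ha; apply: (mulrnI_pchar hK (m:=2)) => //.
    have haw : adj a w by rewrite hsym; apply: hT.
    have htw : adj t w by rewrite hsym.
    by rewrite -(Scl a w haw) -(Scl t w htw).
  have X1 : \sum_(a in twin_class adj t) \sum_(b in twin_class adj t) D b a
            = (D w w *+ 2) *+ #|twin_class adj t|.
    rewrite -sumr_const; apply: eq_bigr => a ha.
    by rewrite -(Scl w a (hT a ha)); move: ha; rewrite inE => /clsEq ->.
  have X2 : \sum_(a in twin_class adj t) \sum_(b in twin_class adj t) D b a
            = D t t *+ #|twin_class adj t|.
    rewrite -sumr_const.
    have : (\sum_(a in twin_class adj t) \sum_(b in twin_class adj t) D b a) *+ 2
        = (\sum_(a in twin_class adj t) D a a) *+ 2.
      rewrite !mulr2n {1}exchange_big /= -!big_split /=.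
      apply: eq_bigr => a ha; rewrite -big_split /= (bigD1 a) //= big1 ?addr0 //.
      move=> b /andP[hb hba]; rewrite (skew b a hba) ?addrN //.
      by move: ha hb; rewrite !inE => ha hb; apply: twT hb ha.
    move=> h; rewrite -(eq_bigr _ (fun a ha => cconst a ha)).
    exact: (mulrnI_pchar hK (m:=2)).
  have htT : t \in twin_class adj t by rewrite inE.
  apply: (mulrnI_pchar hK (m:=#|twin_class adj t|)).
    by apply/card_gt0P; exists t.
  by rewrite -X1 -X2.
have c0 : forall i, D i i = 0.
  move=> i; have [s hs] := nb i.
  have h1 := ckey i s hs.
  have h2 := ckey s i (etrans (hsym s i) hs).
  rewrite h1 -mulrnA in h2.
  apply: (mulrn_eq0_pchar hK (m:=3)) => //.
  apply: (addrI (D i i)); rewrite addr0 -mulrS; exact: (esym h2).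
have S0 : forall i, \sum_(k in twin_class adj i) D k i = 0.
  move=> i; have [s hs] := nb i.
  by rewrite (Scl s i (etrans (hsym s i) hs)) c0 mul0rn.
split; first exact: c0.
split.
  move=> i j hij hne.
  have tw : twins adj i j.
    by apply: contraNT hne => /(nontw i j hij) ->; rewrite eqxx.
  rewrite tw /= /in_Gamma3; case: leqP => // hlt.
  have hj : j \in twin_class adj i by rewrite inE.
  have hi : i \in twin_class adj i by rewrite inE.
  have := S0 j; rewrite -(clsEq _ _ tw) (bigD1 j) //= c0 add0r.
  rewrite (bigD1 i) /=; last by rewrite hi hij.
  rewrite big1 ?addr0; first by move=> h; rewrite h eqxx in hne.
  move=> k /andP[/andP[hk hkj] hki]; exfalso.
  have : (#|i |: (j |: [set k])| <= #|twin_class adj i|)%N.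
    apply: subset_leq_card; apply/subsetP => x; rewrite !inE.
    by move: hi hj hk; rewrite !inE => hi hj hk; case/or3P => /eqP ->.
  rewrite !cardsU1 cards1 !inE negb_or hij (eq_sym i k) hki (eq_sym j k) hkj /=.
  by move=> h; move: (leq_trans h hlt).
split.
  by move=> i j hij tw _; exact: skew.
by move=> i _; exact: S0.
Qed.
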